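(* Let $X=\{x_0,\ldots,x_m\}$, $X'=\{x'_0,\ldots,x'_q\}$, $c\in\mathbb{R}^q\langle\langle X\rangle\rangle$ and $d\in\mathbb{R}^m\langle\langle X'\rangle\rangle$ purely improper. Then the series $c\,\tilde\circ\,\delta_{(d^{\sqcup\!\sqcup -1}\circ c)^{\circ-1}}\in\mathbb{R}^q\langle\langle X\rangle\rangle$ is the unique fixed point of the map $e\mapsto c\,\tilde\circ\,\delta_{(d\circ e)}$ on $\mathbb{R}^q\langle\langle X\rangle\rangle$.
   Context: $\mathbb{R}^\ell\langle\langle X\rangle\rangle$: formal power series in the noncommuting letters of $X$ with coefficients in $\mathbb{R}^\ell$; $c_i$ is the $i$-th component; products of vector-valued series are componentwise. A series is purely improper if every component has nonzero constant term $(c_i,\emptyset)$. Shuffle product $\sqcup\!\sqcup$: bilinear, $(x_i\eta)\sqcup\!\sqcup(x_j\xi)=x_i(\eta\sqcup\!\sqcup x_j\xi)+x_j(x_i\eta\sqcup\!\sqcup\xi)$, $\eta\sqcup\!\sqcup\emptyset=\emptyset\sqcup\!\sqcup\eta=\eta$; $d^{\sqcup\!\sqcup-1}$ is the componentwise shuffle inverse of a purely improper $d$. Composition product: for $c\in\mathbb{R}^k\langle\langle X'\rangle\rangle$, $X'=\{x'_0,\ldots,x'_\ell\}$, and $e\in\mathbb{R}^\ell\langle\langle X\rangle\rangle$, $c\circ e=\sum_{\eta\in X'^\ast}(c,\eta)\psi_e(\eta)(\mathbf 1)$, where $\mathbf 1=1\emptyset$, $\psi_e$ is the homomorphism from words to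 linear endomorphisms of $\mathbb{R}\langle\langle X\rangle\rangle$ with $\psi_e(x'_i)(w)=x_0(e_i\sqcup\!\sqcup w)$, $e_0:=\mathbf 1$. Multiplicative mixed composition for $c\in\mathbb{R}^p\langle\langle X\rangle\rangle$, $g\in\mathbb{R}^m\langle\langle X\rangle\rangle$: $c\,\tilde\circ\,\delta_g=\sum_{\eta\in X^\ast}(c,\eta)\bar\phi_g(\eta)(\mathbf 1)$ with $\bar\phi_g(x_0)(w)=x_0w$, $\bar\phi_g(x_i)(w)=x_i(g_i\sqcup\!\sqcup w)$ ($i\ge1$), extended multiplicatively (concatenation to composition). For purely improper $g\in\mathbb{R}^m\langle\langle X\rangle\rangle$, $g^{\circ-1}$ denotes the unique series $h\in\mathbb{R}^m\langle\langle X\rangle\rangle$ satisfying $h=g^{\sqcup\!\sqcup-1}\,\tilde\circ\,\delta_h$ (equivalently, $\delta_h$ is the inverse of $\delta_g$ in the group of symbols $\delta_g$ with product $\delta_a\circ\delta_b=\delta_{b\sqcup\!\sqcup(a\,\tilde\circ\,\delta_b)}$ and identity $\delta_{\mathbb 1}$, $\mathbb 1=[1\cdots1]^t$). *)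

(* Defs.v *)
From HB Require Import structures.
From mathcomp Require Import all_boot all_order all_algebra.
From Stdlib Require Import ClassicalEpsilon.
Set Implicit Arguments. Unset Strict Implicit. Unset Printing Implicit Defensive.
Import Order.TTheory GRing.Theory Num.Theory.
Local Open Scope ring_scope.

Section FPS.
Variable R : realFieldType.

(* Scalar series over the alphabet {x_0,...,x_(n-1)} = 'I_n : coefficient map on words *)
Definition series (n : nat) := seq 'I_n -> R.

Definition vseries (l n : nat) := 'I_l -> series n.

Definition fps_one {n} : series n := fun w => if w is [::] then 1 else 0.

Definition lprep {n} (i : 'I_n) (s : series n) : series n :=
  fun w => if w is a :: w' then (if a == i then s w' else 0) else 0.

(* shuffle of words, as a list of words with multiplicity:
   (a u) sh (b v) = a (u sh b v) + b (a u sh v), u sh [] = [] sh u = u *)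
Fixpoint shw {A : Type} (u : seq A) : seq A -> seq (seq A) :=
  match u with
  | [::] => fun v => [:: v]
  | a :: u' => fix aux (v : seq A) : seq (seq A) :=
      match v with
      | [::] => [:: u]
      | b :: v' => [seq a :: w | w <- shw u' v] ++ [seq b :: w | w <- aux v']
      end
  end.

(* shuffle product of series: bilinear extension of shw.  Only words u, v with
   size u + size v = size w can contribute to the coefficient of w. *)
Definition shuffle {n} (a b : series n) : series n :=
  fun w => \sum_(k < (size w).+1) \sum_(u : k.-tuple 'I_n)
             \sum_(v : (size w - k).-tuple 'I_n)
               a u * b v * (count_mem w (shw (u : seq 'I_n) (v : seq 'I_n)))%:R.

Definition purely_improper {l n} (c : vseries l n) : Prop :=
  forall i, c i [::] != 0.

Definition shinv {l n} (d : vseries l n) : vseries l n :=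
  fun j => epsilon (inhabits (fun _ => 0)) (fun e : series n => shuffle (d j) e = fps_one).

(* e_0 := 1, e_i := e_(i-1)-th component for i >= 1 *)
Definition ext {l n} (e : vseries l n) (i : 'I_l.+1) : series n :=
  if unlift ord0 i is Some j then e j else fps_one.

(* psi_e(eta)(1), letters of eta in X' = 'I_(q.+1), e in R^q<<X>>, X = 'I_(m.+1) *)
Definition psi1 {q m} (e : vseries q m.+1) (eta : seq 'I_q.+1) : series m.+1 :=
  foldr (fun i s => lprep ord0 (shuffle (ext e i) s)) fps_one eta.

(* composition product c o e.  Since psi_e(eta)(1) is supported on words of
   length >= size eta, only eta with size eta <= size w contribute. *)
Definition fps_comp {k q m} (c : vseries k q.+1) (e : vseries q m.+1) : vseries k m.+1 :=
  fun j w => \sum_(l < (size w).+1) \sum_(eta : l.-tuple 'I_q.+1)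
               c j eta * psi1 e eta w.

Definition phibar1 {m} (g : vseries m m.+1) (eta : seq 'I_m.+1) : series m.+1 :=
  foldr (fun i s => match unlift ord0 i with
                    | Some j => lprep i (shuffle (g j) s)
                    | None => lprep i s
                    end) fps_one eta.

Definition mcomp {p m} (c : vseries p m.+1) (g : vseries m m.+1) : vseries p m.+1 :=
  fun j w => \sum_(l < (size w).+1) \sum_(eta : l.-tuple 'I_m.+1)
               c j eta * phibar1 g eta w.

Definition compinv {m} (g : vseries m m.+1) : vseries m m.+1 :=
  epsilon (inhabits (fun _ _ => 0)) (fun h => h = mcomp (shinv g) h).

End FPS.

(* Main.v *)
Require Import Defs.
From mathcomp Require Import all_boot all_order all_algebra.
From Stdlib Require Import ClassicalEpsilon FunctionalExtensionality.
Import GRing.Theory Num.Theory.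
Local Open Scope ring_scope.
Set Implicit Arguments. Unset Strict Implicit. Unset Printing Implicit Defensive.
Fixpoint words k (n : nat) : seq (seq 'I_k) :=
  if n is n'.+1 then [seq x :: w | x <- enum 'I_k, w <- words k n'] else [:: [::]].
Lemma mem_words k n u : (u \in words k n) = (size u == n).
Proof.
elim: n u => [|n IH] [|x u] //=.
- by apply/allpairsP => -[[a b] /= [_ _]].
- apply/allpairsP/idP => [[[a b] /= [_ Hb [_ ->]]]|Hs].
    by rewrite eqSS -IH.
  rewrite eqSS in Hs; exists (x, u); split => //; first by rewrite mem_enum.
  by rewrite IH.
Qed.
Lemma uniq_words k n : uniq (words k n).
Proof.
elim: n => [|n IH] //=; apply: allpairs_uniq => //; first exact: enum_uniq.
by move=> [a b] [c d] _ _ /= [-> ->].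
Qed.
Lemma big_words_S (R : realFieldType) k (F : seq 'I_k -> R) n :
  \sum_(u <- words k n.+1) F u = \sum_(x : 'I_k) \sum_(u <- words k n) F (x :: u).
Proof.
rewrite /= big_allpairs_dep /=.
by rewrite big_enum.
Qed.

Lemma words0 k : words k 0 = [:: [::]]. Proof. by []. Qed.
Arguments words : simpl never.

Lemma big_tuple_words (R : realFieldType) k n (F : seq 'I_k -> R) :
  \sum_(t : n.-tuple 'I_k) F t = \sum_(u <- words k n) F u.
Proof.
rewrite -(big_map (@tval n 'I_k) xpredT F).
apply: perm_big; apply: uniq_perm.
- by rewrite map_inj_uniq ?index_enum_uniq //; exact: val_inj.
- exact: uniq_words.
move=> u; rewrite mem_words; apply/mapP/idP => [[t _ ->]|/eqP Hs].
  by rewrite size_tuple.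
by exists (Tuple (introT eqP Hs)); rewrite ?mem_index_enum.
Qed.
Lemma shw_nil_r (A : Type) (u : seq A) : shw u [::] = [:: u].
Proof. by case: u. Qed.

Lemma count_map_cons (A : eqType) (x i : A) w s :
  count_mem (i :: w) (map (cons x) s) = ((x == i) * count_mem w s)%N.
Proof.
rewrite count_map; have [->|ne] := eqP.
  by rewrite mul1n; apply: eq_count => t /=; rewrite eqseq_cons eqxx.
by rewrite mul0n; apply/eqP; rewrite -leqn0 leqNgt -has_count; apply/hasP => -[t _] /=;
  rewrite eqseq_cons => /andP[/eqP ? _]; apply: ne.
Qed.

Lemma cnt_cons (A : eqType) (i : A) w u v :
  count_mem (i :: w) (shw u v) =
  ((if u is x :: u' then (x == i) * count_mem w (shw u' v) else 0) +
   (if v is y :: v' then (y == i) * count_mem w (shw u v') else 0))%N.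
Proof.
case: u => [|x u'].
  case: v => [|y v'] //=; rewrite eqseq_cons addn0 add0n.
  by case: (y == i); case: (v' == w).
case: v => [|y v'].
  rewrite shw_nil_r /= eqseq_cons addn0 addn0 shw_nil_r /=.
  by case: (x == i); case: (u' == w).
by rewrite [shw _ _]/= count_cat !count_map_cons.
Qed.

Section Shuf.
Variable R : realFieldType.
Variable n : nat.
Local Notation ser := (series R n).
Implicit Types (a b c : ser) (w v : seq 'I_n).

Definition der (i : 'I_n) (s : ser) : ser := fun w => s (i :: w).

Fixpoint shuf (a b : ser) (w : seq 'I_n) {struct w} : R :=
  match w with
  | [::] => a [::] * b [::]
  | i :: w' => shuf (der i a) b w' + shuf a (der i b) w'
  end.

Definition S (a b : ser) (w : seq 'I_n) : R :=
  \sum_(k < (size w).+1) \sum_(u <- words n k) \sum_(v <- words n (size w - k))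
     a u * b v * (count_mem w (shw u v))%:R.

Lemma shuffleS a b w : shuffle a b w = S a b w.
Proof.
rewrite /shuffle /S; apply: eq_bigr => k _.
under eq_bigr => u _ do rewrite (@big_tuple_words R n _ (fun v => a u * b v * (count_mem w (shw u v))%:R)).
by rewrite (@big_tuple_words R n _ (fun u => \sum_(v <- words n (size w - k)) a u * b v * (count_mem w (shw u v))%:R)).
Qed.

Lemma S_nil a b : S a b [::] = a [::] * b [::].
Proof. by rewrite /S big_ord1 /= words0 !big_seq1 /= mulr1. Qed.

Lemma S_cons a b i w : S a b (i :: w) = S (der i a) b w + S a (der i b) w.
Proof.
rewrite /S.
under eq_bigr => k _ do under eq_bigr => u _ do under eq_bigr => v _ do
  rewrite cnt_cons natrD mulrDr.
under eq_bigr => k _ do under eq_bigr => u _ do rewrite big_split.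
under eq_bigr => k _ do rewrite big_split.
rewrite big_split /=; congr (_ + _).
- rewrite big_ord_recl /= words0 big_seq1 big1 ?add0r; last by move=> v _; rewrite mulr0.
  apply: eq_bigr => k _; rewrite /bump /= subSS big_words_S ?add0n ?add1n.
  rewrite (bigD1 i) //= [X in _ + X]big1 ?addr0.
    by apply: eq_bigr => u _; apply: eq_bigr => v _; rewrite eqxx mul1n.
  move=> x /negbTE xi; apply: big1 => u _; apply: big1 => v _.
  by rewrite xi mul0n mulr0.
- rewrite big_ord_recr subnn words0 (big1 (words n ord_max)) /=; last first.
    by move=> u _; rewrite big_seq1 mulr0.
  rewrite addr0.
  apply: eq_bigr => k _; rewrite /= subSn; last by rewrite -ltnS.
  apply: eq_bigr => u _; rewrite big_words_S.
  rewrite (bigD1 i) //= [X in _ + X]big1 ?addr0.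
    by apply: eq_bigr => v _; rewrite eqxx mul1n.
  move=> x /negbTE xi; apply: big1 => v _.
  by rewrite xi mul0n mulr0.
Qed.

Lemma shuffle_shuf a b w : shuffle a b w = shuf a b w.
Proof.
rewrite shuffleS; elim: w a b => [|i w IH] a b; first by rewrite S_nil.
by rewrite S_cons /= !IH.
Qed.

Lemma shuf_local w a (a' : ser) b (b' : ser) :
  (forall v, (size v <= size w)%N -> a v = a' v) ->
  (forall v, (size v <= size w)%N -> b v = b' v) -> shuf a b w = shuf a' b' w.
Proof.
elim: w a a' b b' => [|i w IH] a a' b b' Ha Hb /=; first by rewrite Ha // Hb.
congr (_ + _); apply: IH => v Hv; (apply: Ha || apply: Hb);
  rewrite /= ?ltnS //; exact: leqW.
Qed.

Lemma shuf_sumr (I : Type) (s : seq I) (F : I -> ser) a w :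
  shuf a (fun v => \sum_(x <- s) F x v) w = \sum_(x <- s) shuf a (F x) w.
Proof.
elim: w a F => [|i w IH] a F /=; first by rewrite mulr_sumr.
by rewrite IH (IH a (fun x => der i (F x))) -big_split.
Qed.

Lemma shuf_scaler r a b w : shuf a (fun v => r * b v) w = r * shuf a b w.
Proof.
elim: w a b => [|i w IH] a b /=; first by rewrite mulrCA.
by rewrite IH (IH a (der i b)) mulrDr.
Qed.

Lemma shuf_addr a b (b' : ser) w : shuf a (fun v => b v + b' v) w = shuf a b w + shuf a b' w.
Proof.
elim: w a b b' => [|i w IH] a b b' /=; first by rewrite mulrDr.
rewrite IH (IH a (der i b) (der i b')); rewrite -!addrA; congr (_ + _).
by rewrite addrCA.
Qed.

Lemma shuf0r a w : shuf a (fun _ => 0) w = 0.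
Proof.
elim: w a => [|i w IH] a /=; first by rewrite mulr0.
by rewrite IH (IH a) addr0.
Qed.

Lemma shuf_comm a b w : shuf a b w = shuf b a w.
Proof.
elim: w a b => [|i w IH] a b /=; first by rewrite mulrC.
by rewrite IH (IH a) addrC.
Qed.

Lemma shuf_suml (I : Type) (s : seq I) (F : I -> ser) b w :
  shuf (fun v => \sum_(x <- s) F x v) b w = \sum_(x <- s) shuf (F x) b w.
Proof. by rewrite shuf_comm shuf_sumr; apply: eq_bigr => x _; rewrite shuf_comm. Qed.

Lemma shuf_scalel r a b w : shuf (fun v => r * a v) b w = r * shuf a b w.
Proof. by rewrite shuf_comm shuf_scaler shuf_comm. Qed.

Lemma shuf_addl a (a' : ser) b w : shuf (fun v => a v + a' v) b w = shuf a b w + shuf a' b w.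
Proof. by rewrite shuf_comm shuf_addr !(shuf_comm b). Qed.

Lemma shuf0l b w : shuf (fun _ => 0) b w = 0.
Proof. by rewrite shuf_comm shuf0r. Qed.

Lemma der_one i : der i (@fps_one R n) = (fun _ => 0).
Proof. by []. Qed.

Lemma shuf1l b w : shuf (fps_one R) b w = b w.
Proof.
elim: w b => [|i w IH] b /=; first by rewrite mul1r.
by rewrite der_one shuf0l add0r IH.
Qed.

Lemma shuf1r b w : shuf b (fps_one R) w = b w.
Proof. by rewrite shuf_comm shuf1l. Qed.

Lemma der_shuf i a b : der i (shuf a b) = (fun v => shuf (der i a) b v + shuf a (der i b) v).
Proof. by []. Qed.

Lemma shuf_assoc a b c w : shuf (shuf a b) c w = shuf a (shuf b c) w.
Proof.
elim: w a b c => [|i w IH] a b c /=; first by rewrite mulrA.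
rewrite !der_shuf shuf_addl shuf_addr !IH addrA //.
Qed.

Lemma shuf_vanish N a b w : (forall v, (size v < N)%N -> b v = 0) -> (size w < N)%N ->
  shuf a b w = 0.
Proof.
elim: w N a b => [|i w IH] N a b Hb Hw /=; first by rewrite Hb // mulr0.
case: N Hb Hw => [//|N] Hb Hw.
rewrite (IH N.+1) ?(IH N) ?addr0 //.
- by move=> v Hv; apply: Hb.
- by apply: ltnW.
Qed.

Lemma shuf_loc0 w a b (b' : ser) : a [::] = 0 ->
  (forall v, (size v < size w)%N -> b v = b' v) -> shuf a b w = shuf a b' w.
Proof.
elim: w a b b' => [|i w IH] a b b' Ha Hb /=; first by rewrite Ha !mul0r.
congr (_ + _).
  by apply: shuf_local => // v Hv; apply: Hb; rewrite /= ltnS.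
by apply: IH => // v Hv; apply: Hb.
Qed.

End Shuf.

Lemma trunc_sum (R : realFieldType) (F : nat -> R) M N : (M <= N)%N ->
  (forall l, (M < l)%N -> F l = 0) ->
  \sum_(l < M.+1) F l = \sum_(l < N.+1) F l.
Proof.
move=> MN H; rewrite -!(big_mkord xpredT) [RHS](big_cat_nat _ (n:=M.+1)) //=.
rewrite [X in _ = _ + X]big_nat_cond [X in _ = _ + X]big1 ?addr0 // => l /andP[/andP[Hl _] _].
exact: H.
Qed.

Section Comp.
Variable R : realFieldType.
Variables q m : nat.
Implicit Types (w v : seq 'I_m.+1).

Definition comp1 (c : series R q.+1) (e : vseries R q m.+1) : series R m.+1 :=
  fun w => \sum_(l < (size w).+1) \sum_(eta : l.-tuple 'I_q.+1) c eta * psi1 e eta w.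

Implicit Types (e : vseries R q m.+1) (c : series R q.+1).

Lemma psi1_cons e i eta k w :
  psi1 e (i :: eta) (k :: w) = if k == ord0 then shuf (ext e i) (psi1 e eta) w else 0.
Proof. by rewrite /= /lprep shuffle_shuf. Qed.

Lemma psi1_vanish e eta w : (size w < size eta)%N -> psi1 e eta w = 0.
Proof.
elim: eta w => [|i eta IH] [|k w] //= Hs.
case: eqP => // _; rewrite shuffle_shuf.
by apply: (shuf_vanish (N := size eta)) => // v Hv; apply: IH.
Qed.

Lemma comp1_words c e w : comp1 c e w =
  \sum_(l < (size w).+1) \sum_(eta <- words q.+1 l) c eta * psi1 e eta w.
Proof.
by apply: eq_bigr => l _; rewrite (@big_tuple_words R q.+1 l (fun eta => c eta * psi1 e eta w)).
Qed.

Lemma comp1_trunc c e w N : (size w <= N)%N -> comp1 c e w =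
  \sum_(l < N.+1) \sum_(eta <- words q.+1 l) c eta * psi1 e eta w.
Proof.
move=> HN; rewrite comp1_words; apply: (trunc_sum (F := fun l => \sum_(eta <- words q.+1 l) c eta * psi1 e eta w)) => // l Hl.
rewrite big_seq big1 // => eta; rewrite mem_words => /eqP He.
by rewrite psi1_vanish ?mulr0 // He.
Qed.

Lemma comp1_nil c e : comp1 c e [::] = c [::].
Proof. by rewrite comp1_words big_ord1 words0 big_seq1 /= mulr1. Qed.

Lemma comp1_cons c e k w : comp1 c e (k :: w) =
  if k == ord0 then \sum_(i < q.+1) shuf (ext e i) (comp1 (der i c) e) w else 0.
Proof.
rewrite comp1_words big_ord_recl words0 big_seq1 /= mulr0 add0r.
under eq_bigr => l _ do rewrite big_words_S.
under eq_bigr => l _ do under eq_bigr => i _ do under eq_bigr => eta _ do rewrite psi1_cons.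
case: eqP => _; last first.
  by rewrite big1 // => l _; rewrite big1 // => i _; rewrite big1 // => eta _; rewrite mulr0.
rewrite exchange_big /=; apply: eq_bigr => i _.
rewrite (shuf_local (a' := ext e i) (b' := fun v => \sum_(l < (size w).+1)
    \sum_(eta <- words q.+1 l) der i c eta * psi1 e eta v)) //; last first.
  by move=> v Hv; rewrite (comp1_trunc _ _ Hv).
rewrite shuf_sumr; apply: eq_bigr => l _; rewrite shuf_sumr; apply: eq_bigr => eta _.
by rewrite shuf_scaler.
Qed.

End Comp.

Section MComp.
Variable R : realFieldType.
Variable m : nat.
Implicit Types (w v : seq 'I_m.+1) (g : vseries R m m.+1) (c s : series R m.+1).

Definition pstep g (x : 'I_m.+1) s : series R m.+1 :=
  match unlift ord0 x with Some j => shuf (g j) s | None => s end.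

Lemma pstep_local g x s s' w : (forall v, (size v <= size w)%N -> s v = s' v) ->
  pstep g x s w = pstep g x s' w.
Proof.
rewrite /pstep; case: unlift => [j|] H; last exact: H.
exact: shuf_local.
Qed.

Lemma pstep_sum g x (I : Type) (r : seq I) (F : I -> series R m.+1) w :
  pstep g x (fun v => \sum_(y <- r) F y v) w = \sum_(y <- r) pstep g x (F y) w.
Proof. by rewrite /pstep; case: unlift => [j|] //; rewrite shuf_sumr. Qed.

Lemma pstep_scale g x r s w : pstep g x (fun v => r * s v) w = r * pstep g x s w.
Proof. by rewrite /pstep; case: unlift => [j|] //; rewrite shuf_scaler. Qed.

Definition mc1 c g : series R m.+1 :=
  fun w => \sum_(l < (size w).+1) \sum_(eta : l.-tuple 'I_m.+1) c eta * phibar1 g eta w.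

Lemma phibar1_cons g x eta k w :
  phibar1 g (x :: eta) (k :: w) = if k == x then pstep g x (phibar1 g eta) w else 0.
Proof.
rewrite /= /pstep; case: unlift => [j|]; rewrite /lprep; case: eqP => //.
by rewrite shuffle_shuf.
Qed.

Lemma phibar1_vanish g eta w : (size w < size eta)%N -> phibar1 g eta w = 0.
Proof.
elim: eta w => [|i eta IH] [|k w] //=; first by case: unlift.
move=> Hs; case: unlift => [j|]; rewrite /lprep; case: eqP => // _; last exact: IH.
rewrite shuffle_shuf.
by apply: (shuf_vanish (N := size eta)) => // v Hv; apply: IH.
Qed.

Lemma mc1_words c g w : mc1 c g w =
  \sum_(l < (size w).+1) \sum_(eta <- words m.+1 l) c eta * phibar1 g eta w.
Proof.
by apply: eq_bigr => l _; rewrite (@big_tuple_words R m.+1 l (fun eta => c eta * phibar1 g eta w)).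
Qed.

Lemma mc1_trunc c g w N : (size w <= N)%N -> mc1 c g w =
  \sum_(l < N.+1) \sum_(eta <- words m.+1 l) c eta * phibar1 g eta w.
Proof.
move=> HN; rewrite mc1_words; apply: (trunc_sum (F := fun l => \sum_(eta <- words m.+1 l) c eta * phibar1 g eta w)) => // l Hl.
rewrite big_seq big1 // => eta; rewrite mem_words => /eqP He.
by rewrite phibar1_vanish ?mulr0 // He.
Qed.

Lemma mc1_nil c g : mc1 c g [::] = c [::].
Proof. by rewrite mc1_words big_ord1 words0 big_seq1 /= mulr1. Qed.

Lemma mc1_cons c g k w : mc1 c g (k :: w) = pstep g k (mc1 (der k c) g) w.
Proof.
rewrite mc1_words big_ord_recl words0 big_seq1 /= mulr0 add0r.
under eq_bigr => l _ do rewrite big_words_S.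
under eq_bigr => l _ do under eq_bigr => i _ do under eq_bigr => eta _ do rewrite phibar1_cons.
rewrite (@pstep_local g k _ (fun v => \sum_(l < (size w).+1)
    \sum_(eta <- words m.+1 l) der k c eta * phibar1 g eta v) w); last first.
  by move=> v Hv; rewrite (mc1_trunc _ _ Hv).
rewrite pstep_sum; apply: eq_bigr => l _; rewrite pstep_sum.
rewrite (bigD1 k) //= [X in _ + X]big1 ?addr0.
  by apply: eq_bigr => eta _; rewrite eqxx pstep_scale.
by move=> i /negbTE ik; apply: big1 => eta _; rewrite eq_sym ik mulr0.
Qed.

End MComp.

Lemma shuf_CA (R : realFieldType) n (a b c : series R n) w :
  shuf a (shuf b c) w = shuf b (shuf a c) w.
Proof.
rewrite -!shuf_assoc; apply: shuf_local => // v _; exact: shuf_comm.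
Qed.

Section Lin.
Variable R : realFieldType.
Variables q m : nat.
Implicit Types (e : vseries R q m.+1) (c : series R q.+1) (g : vseries R m m.+1).

Lemma comp1_sum (I : Type) (r : seq I) (F : I -> series R q.+1) e :
  comp1 (fun v => \sum_(x <- r) F x v) e = (fun w => \sum_(x <- r) comp1 (F x) e w).
Proof.
apply: functional_extensionality => w; rewrite /comp1.
under eq_bigr => l _ do under eq_bigr => eta _ do rewrite mulr_suml.
under eq_bigr => l _ do rewrite exchange_big.
by rewrite exchange_big.
Qed.

Lemma comp1_add (f f' : series R q.+1) e :
  comp1 (fun v => f v + f' v) e = (fun w => comp1 f e w + comp1 f' e w).
Proof.
apply: functional_extensionality => w; rewrite /comp1 -big_split; apply: eq_bigr => l _.
by rewrite -big_split; apply: eq_bigr => eta _; rewrite mulrDl.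
Qed.

Lemma comp1_zero e : comp1 (fun _ => 0) e = (fun _ => 0).
Proof.
apply: functional_extensionality => w; rewrite /comp1 big1 // => l _.
by rewrite big1 // => eta _; rewrite mul0r.
Qed.

Lemma der_comp1_0 c e : der ord0 (comp1 c e) =
  (fun v => \sum_(i < q.+1) shuf (ext e i) (comp1 (der i c) e) v).
Proof. by apply: functional_extensionality => v; rewrite /der comp1_cons eqxx. Qed.

Lemma der_comp1_ne c e k : k != ord0 -> der k (comp1 c e) = (fun _ => 0).
Proof.
by move=> /negbTE nk; apply: functional_extensionality => v; rewrite /der comp1_cons nk.
Qed.

Lemma comp1_one e w : comp1 (fps_one R) e w = fps_one R w.
Proof.
case: w => [|k w]; first by rewrite comp1_nil.
rewrite comp1_cons; case: eqP => // _; rewrite big1 // => i _.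
by rewrite der_one comp1_zero shuf0r.
Qed.

Lemma mc1_sum (I : Type) (r : seq I) (F : I -> series R m.+1) g :
  mc1 (fun v => \sum_(x <- r) F x v) g = (fun w => \sum_(x <- r) mc1 (F x) g w).
Proof.
apply: functional_extensionality => w; rewrite /mc1.
under eq_bigr => l _ do under eq_bigr => eta _ do rewrite mulr_suml.
under eq_bigr => l _ do rewrite exchange_big.
by rewrite exchange_big.
Qed.

Lemma mc1_add (f f' : series R m.+1) g :
  mc1 (fun v => f v + f' v) g = (fun w => mc1 f g w + mc1 f' g w).
Proof.
apply: functional_extensionality => w; rewrite /mc1 -big_split; apply: eq_bigr => l _.
by rewrite -big_split; apply: eq_bigr => eta _; rewrite mulrDl.
Qed.

Lemma mc1_zero g : mc1 (fun _ => 0) g = (fun _ => 0).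
Proof.
apply: functional_extensionality => w; rewrite /mc1 big1 // => l _.
by rewrite big1 // => eta _; rewrite mul0r.
Qed.

Lemma pstep_zero g x w : pstep g x (fun _ => 0) w = 0.
Proof. by rewrite /pstep; case: unlift => [j|] //; rewrite shuf0r. Qed.

Lemma der_mc1 (c : series R m.+1) g k : der k (mc1 c g) = pstep g k (mc1 (der k c) g).
Proof. by apply: functional_extensionality => v; rewrite /der mc1_cons. Qed.

Lemma mc1_one g w : mc1 (fps_one R) g w = fps_one R w.
Proof.
case: w => [|k w]; first by rewrite mc1_nil.
by rewrite mc1_cons der_one mc1_zero pstep_zero.
Qed.

End Lin.

Section Ident.
Variable R : realFieldType.
Variables q m : nat.
Implicit Types (e : vseries R q m.+1) (g : vseries R m m.+1).

Lemma comp1_shuf (a b : series R q.+1) e w :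
  comp1 (shuf a b) e w = shuf (comp1 a e) (comp1 b e) w.
Proof.
have [n] := ubnP (size w); elim: n w a b => // n IH [|k w] a b Hs.
  by rewrite comp1_nil /= !comp1_nil.
rewrite comp1_cons [RHS]/=; case: (k =P ord0) => [->|/eqP nk]; last first.
  by rewrite !der_comp1_ne // shuf0l shuf0r addr0.
rewrite !der_comp1_0 shuf_suml shuf_sumr -big_split; apply: eq_bigr => i _ /=.
rewrite der_shuf comp1_add.
rewrite (@shuf_local _ _ w _ (ext e i) _ (fun v => shuf (comp1 (der i a) e) (comp1 b e) v
   + shuf (comp1 a e) (comp1 (der i b) e) v)) //; last first.
  by move=> v Hv; rewrite !IH //; apply: leq_ltn_trans Hv _.
by rewrite shuf_addr -shuf_assoc shuf_CA.
Qed.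

Lemma mc1_shuf (a b : series R m.+1) g w :
  mc1 (shuf a b) g w = shuf (mc1 a g) (mc1 b g) w.
Proof.
have [n] := ubnP (size w); elim: n w a b => // n IH [|k w] a b Hs.
  by rewrite mc1_nil /= !mc1_nil.
rewrite mc1_cons [RHS]/= !der_mc1 der_shuf mc1_add.
rewrite (@pstep_local _ _ g k _ (fun v => shuf (mc1 (der k a) g) (mc1 b g) v
   + shuf (mc1 a g) (mc1 (der k b) g) v)) //; last first.
  by move=> v Hv; rewrite !IH //; apply: leq_ltn_trans Hv _.
rewrite /pstep; case: unlift => [j|] //.
by rewrite shuf_addr -shuf_assoc shuf_CA.
Qed.

Lemma comp1_loc (c : series R q.+1) e e' w :
  (forall j v, (size v < size w)%N -> e j v = e' j v) -> comp1 c e w = comp1 c e' w.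
Proof.
have [n] := ubnP (size w); elim: n w c => // n IH [|k w] c Hs H.
  by rewrite !comp1_nil.
rewrite !comp1_cons; case: eqP => // _; apply: eq_bigr => i _.
apply: shuf_local => v Hv.
  rewrite /ext; case: unlift => [j|] //; apply: H; by rewrite ltnS.
apply: IH; first by apply: leq_ltn_trans Hv _.
move=> j u Hu; apply: H; rewrite /= ltnS; apply: ltnW; exact: leq_trans Hu Hv.
Qed.

Lemma mc1_loc (c : series R m.+1) g g' w :
  (forall j v, (size v < size w)%N -> g j v = g' j v) -> mc1 c g w = mc1 c g' w.
Proof.
have [n] := ubnP (size w); elim: n w c => // n IH [|k w] c Hs H.
  by rewrite !mc1_nil.
have H2 : forall v, (size v <= size w)%N -> mc1 (der k c) g v = mc1 (der k c) g' v.
  move=> v Hv; apply: IH; first by apply: leq_ltn_trans Hv _.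
  move=> j u Hu; apply: H; rewrite /= ltnS; apply: ltnW; exact: leq_trans Hu Hv.
rewrite !mc1_cons /pstep; case: unlift => [j|]; last exact: H2.
apply: shuf_local => // v Hv; apply: H; by rewrite ltnS.
Qed.

End Ident.

Lemma comp1_mc1 (R : realFieldType) q m (d : series R q.+1) (c : vseries R q m.+1)
  (h : vseries R m m.+1) w :
  comp1 d (fun j => mc1 (c j) h) w = mc1 (comp1 d c) h w.
Proof.
have [n] := ubnP (size w); elim: n w d => // n IH [|k w] d Hs.
  by rewrite comp1_nil mc1_nil comp1_nil.
rewrite comp1_cons mc1_cons; case: (k =P ord0) => [->|/eqP nk]; last first.
  by rewrite der_comp1_ne // mc1_zero pstep_zero.
rewrite ?eqxx der_comp1_0 mc1_sum /pstep unlift_none; apply: eq_bigr => i _.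
rewrite mc1_shuf; apply: shuf_local => v Hv.
  by rewrite /ext; case: unlift => [j|] //; rewrite mc1_one.
by apply: IH; apply: leq_ltn_trans Hv _.
Qed.

Section Fix.
Variables (R : realFieldType) (J A : Type).
Definition contr (F : (J -> seq A -> R) -> (J -> seq A -> R)) :=
  forall h h' w, (forall j v, (size v < size w)%N -> h j v = h' j v) ->
  forall j, F h j w = F h' j w.

Lemma contr_uniq F : contr F -> forall h h', F h = h -> F h' = h' -> h = h'.
Proof.
move=> HF h h' Hh Hh'.
suff H : forall n j w, (size w < n)%N -> h j w = h' j w.
  by apply: functional_extensionality => j; apply: functional_extensionality => w;
    apply: (H (size w).+1).
elim=> // n IH j w Hw; rewrite -Hh -Hh'; apply: HF => i v Hv; apply: IH.
exact: leq_trans Hv _.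
Qed.

Lemma contr_exists F : contr F -> exists h, F h = h.
Proof.
move=> HF; pose hs k := iter k F (fun _ _ => 0).
have Ag : forall n k k', (n <= k)%N -> (n <= k')%N ->
    forall j v, (size v < n)%N -> hs k j v = hs k' j v.
  elim=> // n IH [|k] [|k'] // Hk Hk' j v Hv.
  rewrite /hs !iterS; apply: HF => i u Hu; apply: IH => //.
  exact: leq_trans Hu _.
exists (fun j v => hs (size v).+1 j v).
apply: functional_extensionality => j; apply: functional_extensionality => w.
transitivity (F (hs (size w)) j w).
  apply: HF => i v Hv; apply: (Ag (size v).+1) => //.
by [].
Qed.
End Fix.

Lemma inv_uniq (R : realFieldType) n (a x y : series R n) :
  shuffle a x = fps_one R -> shuffle a y = fps_one R -> x = y.
Proof.
move=> Hx Hy; apply: functional_extensionality => w.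
have Hx' : forall v, shuf a x v = fps_one R v by move=> v; rewrite -shuffle_shuf Hx.
have Hy' : forall v, shuf a y v = fps_one R v by move=> v; rewrite -shuffle_shuf Hy.
transitivity (shuf x (fps_one R) w); first by rewrite shuf1r.
transitivity (shuf x (shuf a y) w); first by apply: shuf_local => // v _; rewrite Hy'.
rewrite -shuf_assoc; transitivity (shuf (fps_one R) y w); last by rewrite shuf1l.
by apply: shuf_local => // v _; rewrite shuf_comm Hx'.
Qed.

Lemma inv_exists (R : realFieldType) n (a : series R n) : a [::] != 0 ->
  exists x, shuffle a x = fps_one R.
Proof.
move=> Ha.
pose a' := fun v => a v - a [::] * fps_one R v.
pose F := fun (h : unit -> series R n) (_ : unit) (w : seq 'I_n) =>
  (fps_one R w - shuf a' (h tt) w) / a [::].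
have HF : contr F.
  move=> h h' w H j; rewrite /F (@shuf_loc0 _ _ w a' (h tt) (h' tt)) //.
    by rewrite /a' /= mulr1 subrr.
  by move=> v Hv; apply: H.
have [h Hh] := contr_exists HF.
exists (h tt); apply: functional_extensionality => w; rewrite shuffle_shuf.
have He : forall w, h tt w = (fps_one R w - shuf a' (h tt) w) / a [::].
  by move=> v; rewrite -{1}Hh.
rewrite (@shuf_local _ _ w a (fun v => a' v + a [::] * fps_one R v) (h tt) (h tt)) //;
  last by move=> v _; rewrite /a' subrK.
rewrite shuf_addl shuf_scalel shuf1l He mulrC divfK //.
by rewrite addrC subrK.
Qed.

Unset Implicit Arguments.
Set Strict Implicit.

Theorem theorem14 (R : realFieldType) (m q : nat)
  (c : vseries R q m.+1) (d : vseries R m q.+1)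
  (hc : purely_improper c) (hd : purely_improper d) :
  let e0 := mcomp c (compinv (fps_comp (shinv d) c)) in
  mcomp c (fps_comp d e0) = e0 /\
  (forall e : vseries R q m.+1, mcomp c (fps_comp d e) = e -> e = e0).
Proof.
move=> e0.
have Hsd : forall j, shuffle (d j) (shinv d j) = fps_one R.
  move=> j; rewrite /shinv; apply: (epsilon_spec (inhabits (fun _ => 0))
    (fun x => shuffle (d j) x = fps_one R)).
  exact: inv_exists (hd j).
set g := fps_comp (shinv d) c.
have Hg : shinv g = fps_comp d c.
  apply: functional_extensionality => j.
  have P1 : shuffle (g j) (comp1 (d j) c) = fps_one R.
    apply: functional_extensionality => w; rewrite shuffle_shuf.
    change (shuf (comp1 (shinv d j) c) (comp1 (d j) c) w = fps_one R w).
    rewrite -comp1_shuf -(comp1_one c w).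
    congr (comp1 _ c w); apply: functional_extensionality => v.
    by rewrite shuf_comm -shuffle_shuf Hsd.
  have P2 : shuffle (g j) (shinv g j) = fps_one R.
    rewrite /shinv; apply: (epsilon_spec (inhabits (fun _ => 0))
      (fun x => shuffle (g j) x = fps_one R)).
    by exists (comp1 (d j) c).
  exact: inv_uniq P2 P1.
have HFh : contr (fun h : vseries R m m.+1 => mcomp (shinv g) h).
  by move=> h h' w H j; apply: mc1_loc.
have Hh : compinv g = mcomp (shinv g) (compinv g).
  rewrite /compinv; apply: (epsilon_spec (inhabits (fun _ _ => 0))
    (fun h => h = mcomp (shinv g) h)).
  by have [h Hh] := contr_exists HFh; exists h.
have Hd : fps_comp d e0 = compinv g.
  rewrite [RHS]Hh Hg; apply: functional_extensionality => j.
  apply: functional_extensionality => w.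
  exact: comp1_mc1.
have HPhi : contr (fun e : vseries R q m.+1 => mcomp c (fps_comp d e)).
  move=> e e' w H j; apply: mc1_loc => i v Hv.
  apply: comp1_loc => k u Hu; apply: H; exact: ltn_trans Hu Hv.
split; first by rewrite Hd.
move=> e He; apply: (contr_uniq HPhi) => //.
by rewrite Hd.
Qed.
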